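(* Consider $N$ agents $\mathcal{V}=\{1,\dots,N\}$ interacting over a fixed graph in which agent $i$ has the nonempty neighbor set $\mathcal{N}_i$ of cardinality $n_i$. Let $\beta\in[0,1]$ and let $(q_p(k))_{k\ge0}$ be a sequence with values in $\{-1,1\}$. The opinions evolve by $$\theta_i(k+1)=\theta_i(k)+\bigl(1-\theta_i(k)^2\bigr)\Bigl[\beta\bigl(q_p(k)-\theta_i(k)\bigr)+(1-\beta)\frac{1}{n_i}\sum_{j\in\mathcal{N}_i}\bigl(q_j(k)-\theta_i(k)\bigr)\Bigr],$$ with actions $q_j(k)=1$ if $\theta_j(k)>0$ or ($\theta_j(k)=0$ and $q_j(k-1)=1$), and $q_j(k)=-1$ if $\theta_j(k)<0$ or ($\theta_j(k)=0$ and $q_j(k-1)=-1$). Let $f_i(k)=(1-\beta)\frac{n_i^+(k)-n_i^-(k)}{n_i}+\beta q_p(k)$, where $n_i^{\pm}(k)=|\{j\in\mathcal{N}_i:q_j(k)=\pm1\}|$. Let $i\in\mathcal{V}$ with $\theta_i(0)\in(-1,1)$. Then for every $k$: 1. if $f_i(k)\ge 0$ and $q_i(k)=1$, then $q_i(k+1)=1$; 2. if $f_i(k)\le 0$ and $q_i(k)=-1$, then $q_i(k+1)=-1$.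
   Context: Opinions take values in $[-1,1]$. The neighbor set $\mathcal{N}_i$ consists of the agents $j$ with $(j,i)$ an edge of the graph. *)

(* Defs.v *)
From mathcomp Require Import all_boot all_order all_algebra.
Set Implicit Arguments. Unset Strict Implicit. Unset Printing Implicit Defensive.
Import Order.TTheory GRing.Theory Num.Theory.
Local Open Scope ring_scope.

Definition nbrs (N : nat) (e : rel 'I_N) (i : 'I_N) : {set 'I_N} :=
  [set j | e j i].

Definition ndeg (N : nat) (e : rel 'I_N) (i : 'I_N) : nat := #|nbrs e i|.

Definition nplus (R : numDomainType) (N : nat) (e : rel 'I_N)
  (qk : 'I_N -> R) (i : 'I_N) : nat := #|[set j in nbrs e i | qk j == 1]|.
Definition nminus (R : numDomainType) (N : nat) (e : rel 'I_N)
  (qk : 'I_N -> R) (i : 'I_N) : nat := #|[set j in nbrs e i | qk j == -1]|.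

Definition fi (R : numFieldType) (N : nat) (e : rel 'I_N) (beta : R)
  (qp : nat -> R) (q : nat -> 'I_N -> R) (i : 'I_N) (k : nat) : R :=
  (1 - beta) * ((nplus e (q k) i)%:R - (nminus e (q k) i)%:R) / (ndeg e i)%:R
  + beta * qp k.

Definition step (R : numFieldType) (N : nat) (e : rel 'I_N) (beta : R)
  (qp : nat -> R) (theta q : nat -> 'I_N -> R) (i : 'I_N) (k : nat) : R :=
  theta k i + (1 - theta k i ^+ 2) *
    (beta * (qp k - theta k i)
     + (1 - beta) * ((ndeg e i)%:R^-1 * \sum_(j in nbrs e i) (q k j - theta k i))).

(* Main.v *)
Require Import Defs.
From mathcomp Require Import all_boot all_order all_algebra.
From mathcomp Require Import ring lra.
Import Order.TTheory GRing.Theory Num.Theory.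
Local Open Scope ring_scope.

Lemma sum_q (R : realFieldType) (N : nat) (e : rel 'I_N) (qk : 'I_N -> R) (a : 'I_N) :
  (forall j, qk j = 1 \/ qk j = -1) ->
  \sum_(j in nbrs e a) qk j = (nplus e qk a)%:R - (nminus e qk a)%:R.
Proof.
move=> Hq; rewrite /nplus /nminus -!sum1_card !natr_sum.
rewrite big_mkcond [X in _ = X - _]big_mkcond [X in _ = _ - X]big_mkcond /=.
rewrite -sumrB; apply: eq_bigr => j _; rewrite !inE.
case: (e j a) => /=; last by rewrite subrr.
have h1 : (1 == -1 :> R) = false by apply/negbTE; rewrite neq_lt; apply/orP; right; lra.
have h2 : (-1 == 1 :> R) = false by rewrite eq_sym.
by case: (Hq j) => ->; rewrite ?h1 ?h2 eqxx /=; lra.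
Qed.

Lemma step_eq (R : realFieldType) (N : nat) (e : rel 'I_N)
  (beta : R) (qp : nat -> R) (theta q : nat -> 'I_N -> R) (a : 'I_N) k :
  (0 < ndeg e a)%N ->
  step e beta qp theta q a k = theta k a + (1 - theta k a ^+ 2) *
    (beta * qp k + (1 - beta) * ((\sum_(j in nbrs e a) q k j) / (ndeg e a)%:R) - theta k a).
Proof.
move=> hn; rewrite /step sumrB sumr_const -/(ndeg e a) -mulr_natr.
have hn' : (ndeg e a)%:R != 0 :> R by rewrite pnatr_eq0 -lt0n.
by field.
Qed.

Lemma avg_bound (R : realFieldType) (N : nat) (e : rel 'I_N) (qk : 'I_N -> R) (a : 'I_N) :
  (0 < ndeg e a)%N -> (forall j, qk j = 1 \/ qk j = -1) ->
  -1 <= (\sum_(j in nbrs e a) qk j) / (ndeg e a)%:R <= 1.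
Proof.
move=> hn Hq.
have hn' : 0 < (ndeg e a)%:R :> R by rewrite ltr0n.
have : `|\sum_(j in nbrs e a) qk j| <= (ndeg e a)%:R.
  apply: le_trans (ler_norm_sum _ _ _) _.
  rewrite /ndeg -sum1_card natr_sum; apply: ler_sum => j _.
  by case: (Hq j) => ->; rewrite ?normrN normr1.
rewrite ler_norml => /andP [h1 h2].
by rewrite ler_pdivlMr // ler_pdivrMr // mulN1r mul1r h1 h2.
Qed.

Lemma g_bound (R : realFieldType) (b p x : R) :
  0 <= b <= 1 -> (p = 1 \/ p = -1) -> -1 <= x <= 1 -> -1 <= b * p + (1 - b) * x <= 1.
Proof.
move=> /andP [h0 h1] hp /andP [x0 x1].
have ha : 0 <= 1 - b by lra.
have hb : 0 <= 1 - x by lra.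
have hc : 0 <= x + 1 by lra.
have := mulr_ge0 ha hb; have := mulr_ge0 ha hc.
by case: hp => ->; move=> ? ?; apply/andP; split; nra.
Qed.

Lemma t_bound (R : realFieldType) (t g : R) :
  -1 <= t <= 1 -> -1 <= g <= 1 -> -1 <= t + (1 - t ^+ 2) * (g - t) <= 1.
Proof.
move=> /andP [t0 t1] /andP [g0 g1].
have h : 0 <= 1 - t ^+ 2 by nra.
have ha : 0 <= 1 - g by lra.
have hb : 0 <= g + 1 by lra.
have := mulr_ge0 h ha; have := mulr_ge0 h hb.
have ta : 0 <= 1 - t by lra.
have tb : 0 <= t + 1 by lra.
have := mulr_ge0 (mulr_ge0 ta ta) tb; have := mulr_ge0 (mulr_ge0 tb tb) ta.
move=> ? ? ? ?; apply/andP; split; nra.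
Qed.

Lemma pos_step (R : realFieldType) (t g : R) :
  0 <= t <= 1 -> 0 <= g -> 0 <= t + (1 - t ^+ 2) * (g - t).
Proof.
move=> /andP [t0 t1] g0.
have h : 0 <= 1 - t ^+ 2 by nra.
have := mulr_ge0 h g0; have := mulr_ge0 (mulr_ge0 t0 t0) t0.
move=> ? ?; nra.
Qed.

Theorem mainTheorem3 (R : realFieldType) (N : nat) (e : rel 'I_N)
  (beta : R) (qp : nat -> R) (theta q : nat -> 'I_N -> R) (i : 'I_N) :
  (* every neighbor set is nonempty *)
  (forall a : 'I_N, 0 < ndeg e a)%N ->
  0 <= beta <= 1 ->
  (forall k, qp k = 1 \/ qp k = -1) ->
  (* initial opinions lie in [-1,1] *)
  (forall a : 'I_N, -1 <= theta 0%N a <= 1) ->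
  (* opinion dynamics *)
  (forall k a, theta k.+1 a = step e beta qp theta q a k) ->
  (* action rule *)
  (forall k a, q k a = 1 \/ q k a = -1) ->
  (forall k a, 0 < theta k a -> q k a = 1) ->
  (forall k a, theta k a < 0 -> q k a = -1) ->
  (forall k a, theta k.+1 a = 0 -> q k.+1 a = q k a) ->
  -1 < theta 0%N i < 1 ->
  forall k : nat,
    (0 <= fi e beta qp q i k -> q k i = 1 -> q k.+1 i = 1) /\
    (fi e beta qp q i k <= 0 -> q k i = -1 -> q k.+1 i = -1).
Proof.
move=> hn hb hqp h0 hstep hq hpos hneg hzero _.
have hfi : forall k a, fi e beta qp q a k =
    beta * qp k + (1 - beta) * ((\sum_(j in nbrs e a) q k j) / (ndeg e a)%:R).
  by move=> k a; rewrite /fi sum_q // mulrA addrC.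
have hg : forall k a, -1 <= fi e beta qp q a k <= 1.
  by move=> k a; rewrite hfi; apply: g_bound => //; apply: avg_bound.
have hth : forall k a, theta k.+1 a = theta k a + (1 - theta k a ^+ 2) * (fi e beta qp q a k - theta k a).
  by move=> k a; rewrite hstep step_eq // hfi.
have inv : forall k a, -1 <= theta k a <= 1.
  elim=> [|k IH] a; first exact: h0.
  by rewrite hth; apply: t_bound.
move=> k; split=> hf hqk.
- have ht : 0 <= theta k i.
    rewrite leNgt; apply/negP => /hneg; rewrite hqk => /eqP.
    by rewrite -subr_eq0 opprK (_ : (1 + 1 : R) = 2) // pnatr_eq0.
  have := @pos_step _ (theta k i) _ _ hf.
  rewrite -hth; case/andP: (inv k i) => _ h1; rewrite ht h1 => /(_ isT).
  rewrite le_eqVlt => /orP [/eqP h | /hpos //].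
  by rewrite hzero // -h.
- have ht : theta k i <= 0.
    rewrite leNgt; apply/negP => /hpos; rewrite hqk => /eqP.
    by rewrite -subr_eq0 -opprD oppr_eq0 (_ : (1 + 1 : R) = 2) // pnatr_eq0.
  have := @pos_step _ (- theta k i) (- fi e beta qp q i k).
  case/andP: (inv k i) => h1 _.
  rewrite oppr_ge0 ht oppr_ge0 hf lerNl h1 => /(_ isT isT).
  rewrite sqrrN -[X in _ * X]opprD mulrN -opprD oppr_ge0 -hth.
  rewrite le_eqVlt => /orP [/eqP h | /hneg //].
  by rewrite hzero // hqk.
Qed.
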